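(* Let $G_1, G_2, \ldots$ be a sequence of ordered graphs, and suppose that either every $G_i$ is irreducible, or every complement $\overline{G_i}$ is irreducible. Let $\mathcal{P}$ be the set of all ordered graphs $G$ such that $G_i$ is not an induced ordered subgraph of $G$ for every $i \in \mathbb{N}$, and let $\mathcal{P}_n$ be the set of members of $\mathcal{P}$ with vertex set $[n]$. Then either $\lim_{n \to \infty} |\mathcal{P}_n|^{1/n}$ exists, or $\liminf_{n \to \infty} |\mathcal{P}_n|^{1/n} = \infty$.
   Context: An ordered graph of order $n$ is a graph on vertex set $[n]$ with the natural order. $G$ is an induced ordered subgraph of $H$ if there is an injective order-preserving map $V(G)\to V(H)$ preserving adjacency and non-adjacency. A pair of vertices $u<v$ of an ordered graph $G$ separates the edges of $G$ if for every edge $ij\in E(G)$ with $i<j$, either $j\leqslant u$ or $v\leqslant i$. $G$ is irreducible if no pair of vertices separates the edges of $G$. *)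

(* Defs.v *)
From HB Require Import structures.
From mathcomp Require Import all_boot all_order all_algebra.
From mathcomp Require Import all_classical all_reals all_analysis.
Set Implicit Arguments. Unset Strict Implicit. Unset Printing Implicit Defensive.
Import Order.TTheory GRing.Theory Num.Theory.

(* An ordered graph of order n: adjacency on vertex set [n] = 'I_n
   (vertex k+1 of the paper is represented by k), with the natural order. *)
Definition ograph (n : nat) := {ffun 'I_n * 'I_n -> bool}.

Definition adj n (g : ograph n) (i j : 'I_n) : bool := g (i, j).

Definition is_graph n (g : ograph n) : bool :=
  [forall i : 'I_n, forall j : 'I_n, (adj g i j == adj g j i) && ~~ adj g i i].

Definition ocompl n (g : ograph n) : ograph n :=
  [ffun p : 'I_n * 'I_n => (p.1 != p.2) && ~~ g p].

Definition induced_sub m n (g : ograph m) (h : ograph n) : Prop :=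
  exists f : 'I_m -> 'I_n,
    injective f /\ (forall i j : 'I_m, (i <= j)%N -> (f i <= f j)%N) /\
    (forall i j : 'I_m, i != j -> adj h (f i) (f j) = adj g i j).

Definition separates n (g : ograph n) (u v : 'I_n) : Prop :=
  forall i j : 'I_n, (i < j)%N -> adj g i j -> (j <= u)%N \/ (v <= i)%N.

Definition irreducible n (g : ograph n) : Prop :=
  ~ exists u v : 'I_n, (u < v)%N /\ separates g u v.

Definition Pn (ord : nat -> nat) (G : forall i, ograph (ord i)) (n : nat)
  : {set ograph n} :=
  [set g : ograph n | is_graph g &
     `[< forall i : nat, ~ induced_sub (G i) g >]].

(* Main.v *)
Require Import Defs.
From HB Require Import structures.
From mathcomp Require Import all_boot all_order all_algebra.
From mathcomp Require Import all_classical all_reals all_analysis.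
From mathcomp Require Import ring lra zify.
Import Order.TTheory GRing.Theory Num.Theory.
Import numFieldNormedType.Exports.
Local Open Scope classical_set_scope.
Local Open Scope ring_scope.
Set Implicit Arguments. Unset Strict Implicit. Unset Printing Implicit Defensive.

Definition concat m n (b : bool) (g : ograph m) (h : ograph n) : ograph (m+n) :=
 [ffun p : 'I_(m+n) * 'I_(m+n) => match fintype.split p.1, fintype.split p.2 with
   | inl i, inl j => g (i,j) | inr i, inr j => h (i,j) | _, _ => b end].

Lemma concat_lsh m n b g h (i j : 'I_m) :
  adj (concat b g h) (lshift n i) (lshift n j) = adj g i j.
Proof. by rewrite /adj ffunE /= !(unsplitK (inl _ _)). Qed.

Lemma concat_rsh m n b g h (i j : 'I_n) :
  adj (concat b g h) (rshift m i) (rshift m j) = adj h i j.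
Proof. by rewrite /adj ffunE /= !(unsplitK (inr _ _)). Qed.

Lemma concat_cross m n b g h (x y : 'I_(m+n)) :
  (x < m)%N -> (m <= y)%N -> adj (concat b g h) x y = b.
Proof.
move=> xm my; rewrite /adj ffunE /=.
case: splitP => [i _|i Ei]; last by move: xm; rewrite Ei ltnNge leq_addr.
case: splitP => [j Ej|j _] //; by move: my; rewrite Ej leqNgt ltn_ord.
Qed.

Lemma split_embed p m n (H : ograph p) (f : 'I_p -> 'I_(m+n)) :
  irreducible H -> injective f -> (forall i j : 'I_p, (i <= j)%N -> (f i <= f j)%N) ->
  (forall x y : 'I_p, (x < y)%N -> (f x < m)%N -> (m <= f y)%N -> ~~ adj H x y) ->
  (forall x, (f x < m)%N) \/ (forall x, (m <= f x)%N).
Proof.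
move=> Hirr finj fmono cross.
case: (boolP [exists x, (f x < m)%N]) => [/existsP [x0 Hx0]|]; last first.
  by move/existsPn => H0; right => x; rewrite leqNgt H0.
case: (boolP [exists x, (m <= f x)%N]) => [/existsP [y0 Hy0]|]; last first.
  by move/existsPn => H0; left => x; rewrite ltnNge H0.
exfalso; apply: Hirr.
case: (@arg_maxnP _ x0 (fun x => f x < m)%N (fun x : 'I_p => nat_of_ord x) Hx0) => u Pu maxu.
case: (@arg_minnP _ y0 (fun x => m <= f x)%N (fun x : 'I_p => nat_of_ord x) Hy0) => v Pv minv.
exists u, v; split.
  rewrite ltnNge; apply/negP => vu; have := fmono _ _ vu.
  by move=> /(leq_trans Pv); rewrite leqNgt Pu.
move=> i j ij adjij.
case: (ltnP (f j) m) => fj; first by left; exact: maxu.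
case: (ltnP (f i) m) => fi; first by move: (cross _ _ ij fi fj); rewrite adjij.
by right; exact: minv.
Qed.

Lemma adj_if b p (H : ograph p) x y :
  adj (if b then ocompl H else H) x y = if b then (x != y) && ~~ adj H x y else adj H x y.
Proof. by case: b; rewrite /adj ?ffunE. Qed.

Section P.
Variables (ord : nat -> nat) (G : forall i : nat, ograph (ord i)).

Lemma concat_in b m n (g : ograph m) (h : ograph n) :
  (forall i, irreducible (if b then ocompl (G i) else G i)) ->
  g \in Pn G m -> h \in Pn G n -> concat b g h \in Pn G (m+n).
Proof.
move=> Hirr; rewrite !inE => /andP[gg /asboolP ng] /andP[hg /asboolP nh].
apply/andP; split.
  apply/forallP => x; apply/forallP => y; apply/andP; split.
    rewrite /adj !ffunE /=.
    case: (fintype.split x) => i; case: (fintype.split y) => j //.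
      by move: gg => /forallP/(_ i)/forallP/(_ j)/andP[/eqP E _]; rewrite /adj in E; rewrite E.
    by move: hg => /forallP/(_ i)/forallP/(_ j)/andP[/eqP E _]; rewrite /adj in E; rewrite E.
  rewrite /adj !ffunE /=.
  case: (fintype.split x) => i.
    by move: gg => /forallP/(_ i)/forallP/(_ i)/andP[].
  by move: hg => /forallP/(_ i)/forallP/(_ i)/andP[].
apply/asboolP => i [f [finj [fmono fadj]]].
have key := split_embed (Hirr i) finj fmono.
case: key.
- move=> x y xy fx fy; rewrite adj_if.
  have xny : x != y by rewrite neq_ltn xy.
  have := fadj x y xny; rewrite concat_cross // => <-.
  by case: b {Hirr fadj} => //=; rewrite xny.
- move=> low; apply: ng (i) _.
  pose f' x := Ordinal (low x).
  have E x : f x = lshift n (f' x) by apply/val_inj.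
  exists f'; split; [|split].
  + by move=> x y /(congr1 (fun z => lshift n z)); rewrite -!E => /finj.
  + by move=> x y /fmono; rewrite !E.
  + by move=> x y xy; rewrite -(fadj x y xy) !E concat_lsh.
- move=> high; apply: nh (i) _.
  have lt x : (f x - m < n)%N.
    by rewrite ltn_subLR ?high // ltn_ord.
  pose f' x := Ordinal (lt x).
  have E x : f x = rshift m (f' x) by apply/val_inj => /=; rewrite subnKC ?high.
  exists f'; split; [|split].
  + by move=> x y /(congr1 (fun z => rshift m z)); rewrite -!E => /finj.
  + by move=> x y /fmono; rewrite !E /= leq_add2l.
  + by move=> x y xy; rewrite -(fadj x y xy) !E concat_rsh.
Qed.

Lemma card_super b m n :
  (forall i, irreducible (if b then ocompl (G i) else G i)) ->
  (#|Pn G m| * #|Pn G n| <= #|Pn G (m+n)|)%N.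
Proof.
move=> Hirr; rewrite -cardsX.
have inj : injective (fun x : ograph m * ograph n => concat b x.1 x.2).
  move=> [g h] [g' h'] /= E; congr pair; apply/ffunP => -[i j].
    by have := congr1 (fun c => adj c (lshift n i) (lshift n j)) E; rewrite !concat_lsh.
  by have := congr1 (fun c => adj c (rshift m i) (rshift m j)) E; rewrite !concat_rsh.
rewrite -(card_imset _ inj); apply: subset_leq_card.
apply/fintype.subsetP => _ /imsetP [[g h] /finset.setXP[gi hi] ->].
exact: concat_in.
Qed.

Definition restr k n (le : (k <= n)%N) (g : ograph n) : ograph k :=
  [ffun p : 'I_k * 'I_k => g (widen_ord le p.1, widen_ord le p.2)].

Lemma restr_in k n (le : (k <= n)%N) g : g \in Pn G n -> restr le g \in Pn G k.
Proof.
rewrite !inE => /andP[gg /asboolP ng]; apply/andP; split.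
  apply/forallP => x; apply/forallP => y; rewrite /adj !ffunE /=.
  have := forallP (forallP gg (widen_ord le x)) (widen_ord le y); by rewrite /adj.
apply/asboolP => i [f [finj [fmono fadj]]]; apply: (ng i).
exists (widen_ord le \o f); split; [|split].
- apply: inj_comp finj => x y E; apply/val_inj; exact: (congr1 val E).
- by move=> x y /fmono.
- by move=> x y xy; rewrite -(fadj x y xy) /adj ffunE.
Qed.

Lemma card_her k n : (k <= n)%N -> (0 < #|Pn G n|)%N -> (0 < #|Pn G k|)%N.
Proof.
move=> le; rewrite !card_gt0 => /set0Pn [g gi]; apply/set0Pn.
by exists (restr le g); exact: restr_in.
Qed.
End P.


Lemma fekete (R : realType) (c : nat -> nat) :
 (forall m n, c m * c n <= c (m+n))%N -> (forall k n, k <= n -> 0 < c n -> 0 < c k)%N ->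
 (exists l : R, (fun n => (c n)%:R `^ (n%:R)^-1) @ \oo --> l) \/
  limn_einf (fun n => ((c n)%:R `^ (n%:R)^-1 : R)%:E) = +oo%E.
Proof.
move=> hsup hher.
case: (pselect (exists k, c k = 0%N)) => [[k ck]|hpos].
  left; exists 0; apply: cvg_near_cst.
  exists k.+1 => // n /= Nn.
  have cn : c n = 0%N.
    apply/eqP; rewrite -leqn0 leqNgt; apply/negP => /(hher k n (ltnW Nn)).
    by rewrite ck.
  rewrite cn powR0 // invr_eq0 pnatr_eq0 -lt0n.
  exact: leq_ltn_trans Nn.
have cpos n : (0 < c n)%N.
  by rewrite lt0n; apply/eqP => cn; apply: hpos; exists n.
pose b n : R := ln (c n)%:R / n%:R.
have aE n : (c n)%:R `^ (n%:R)^-1 = expR (b n).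
  by rewrite /powR pnatr_eq0 eqn0Ngt cpos /= mulrC.
have b0 : b 0%N = 0 by rewrite /b invr0 mulr0.
have lnge0 n : 0 <= ln ((c n)%:R : R) by apply: ln_ge0; rewrite ler1n.
have bge0 n : 0 <= b n by apply: divr_ge0.
have pow k q r : (c k ^ q * c r <= c (q * k + r))%N.
  elim: q => [|q IH]; first by rewrite expn0 mul1n.
  rewrite expnS -mulnA mulSn -addnA.
  apply: leq_trans (hsup _ _); exact: leq_mul.
have K k n : (0 < k)%N -> (n - k)%:R * b k <= ln (c n)%:R.
  move=> k0.
  have h1 : (c k ^ (n %/ k) <= c n)%N.
    rewrite {2}(divn_eq n k); apply: leq_trans (pow _ _ _).
    by rewrite leq_pmulr.
  have h2 : (n %/ k)%:R * ln (c k)%:R <= ln ((c n)%:R : R).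
    rewrite mulr_natl -lnXn ?ltr0n // -natrX ler_ln ?posrE ?ltr0n ?expn_gt0 ?cpos //.
    by rewrite ler_nat.
  apply: le_trans h2.
  have h3 : (n - k <= n %/ k * k)%N.
    have := ltn_pmod n k0; have := divn_eq n k; set q := (n %/ k)%N; set r := (n %% k)%N; nia.
  apply: le_trans (_ : (n %/ k * k)%:R * b k <= _).
    by apply: ler_wpM2r => //; rewrite ler_nat.
  have kr : (k%:R : R) != 0 by rewrite pnatr_eq0 -lt0n.
  rewrite /b natrM le_eqVlt; apply/orP; left; apply/eqP; by field; rewrite ?kr.
have lower k e : (0 < k)%N -> 0 < e -> \forall n \near \oo, b k - e < b n.
  move=> k0 e0.
  exists (maxn k (Num.truncn (k%:R * b k / e)).+1) => // n /=.
  rewrite geq_max => /andP[kn Nn].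
  have n0 : (0 < n)%N by exact: leq_trans k0 kn.
  have n0r : 0 < (n%:R : R) by rewrite ltr0n.
  rewrite /b ltr_pdivlMr //.
  have := K k n k0; rewrite natrB // -/(b k) => Kn.
  have h : k%:R * b k / e < n%:R.
    apply: lt_le_trans (truncnS_gt _) _; rewrite ler_nat; exact: Nn.
  move: h; rewrite ltr_pdivrMr // => h.
  nra.
have -> : (fun n => (c n)%:R `^ (n%:R)^-1) = expR \o b.
  by apply/funext => n; rewrite aE.
case: (pselect (exists B, forall n, b n <= B)) => [[B bB]|nb].
  left.
  pose S := range b.
  have hS : has_sup S.
    split; first by exists (b 0%N); exists 0%N.
    by exists B => _ [n _ <-].
  have bcvg : b @ \oo --> sup S.
    apply/cvgrPdist_lt => e e0.
    have e20 : 0 < e / 2 by rewrite divr_gt0.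
    have [k [k0 hk]] : exists k, (0 < k)%N /\ sup S - e / 2 < b k.
      have [_ [k _ <-] hk] := sup_adherent e20 hS.
      case: (posnP k) => [k0|k0]; last by exists k.
      exists 1%N; split => //; apply: lt_le_trans hk _.
      by rewrite k0 b0.
    apply: filterS (lower k (e / 2) k0 e20) => n hn.
    have bn : b n <= sup S by apply: sup_upper_bound => //; exists n.
    rewrite ger0_norm ?subr_ge0 //.
    lra.
  exists (expR (sup S)).
  by apply: continuous_cvg bcvg; exact: continuous_expR.
right.
have ub : forall A, exists n, A < b n.
  move=> A; apply: contra_notP nb => H; exists A => n.
  rewrite leNgt; apply/negP => An; apply: H; by exists n.
have acvg : (expR \o b) @ \oo --> +oo.
  apply/cvgryPge => M.
  have [k hk] := ub (`|M| + 1).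
  have k0 : (0 < k)%N.
    rewrite lt0n; apply/eqP => k0; move: hk; rewrite k0 b0.
    have := normr_ge0 M; lra.
  apply: filterS (lower k 1 k0 ltr01) => n hn /=.
  have := expR_ge1Dx (b n); have := ler_norm M; lra.
have -> : (fun n => ((c n)%:R `^ (n%:R)^-1 : R)%:E) = (fun n => ((expR \o b) n)%:E).
  by apply/funext => n; rewrite /= aE.
exact: (cvg_limn_einf_sup (proj2 (cvgeryP _) acvg)).1.
Qed.

Unset Implicit Arguments.

Theorem theorem30 (R : realType) (ord : nat -> nat)
  (G : forall i : nat, ograph (ord i))
  (HG : forall i : nat, is_graph (G i))
  (Hirr : (forall i : nat, irreducible (G i)) \/
          (forall i : nat, irreducible (ocompl (G i)))) :
  let a : nat -> R := fun n => (#|Pn G n|%:R : R) `^ (n%:R)^-1 in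
  (exists l : R, a @ \oo --> l) \/
  limn_einf (fun n => (a n)%:E) = +oo%E.
Proof.
move=> a.
have [b Hb] : exists b, forall i, irreducible (if b then ocompl (G i) else G i).
  by case: Hirr => H; [exists false | exists true].
have h1 : forall m n : nat, (#|Pn G m| * #|Pn G n| <= #|Pn G (m + n)|)%N.
  by move=> m n; exact: card_super Hb.
have h2 : forall k n : nat, (k <= n)%N -> (0 < #|Pn G n|)%N -> (0 < #|Pn G k|)%N.
  by move=> k n; exact: card_her.
exact: (@fekete R (fun n => #|Pn G n|) h1 h2).
Qed.
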